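(* Let $M\in\mathcal{M}$ be delay-free with $\mathrm{Supp}(M)=\{i_1,\dots,i_k\}$, where $i_1<\dots<i_k$, and denote the rows of $M$ by $M_1,\dots,M_n$. Then the following are equivalent: (a) The $k\times n$ matrix $\widetilde M$ with rows $M_{i_1},\dots,M_{i_k}$ is basic. (b) There exist row vectors $\widehat M_i\in\mathbb{F}[t]^{1\times n}$ for $i\in\{1,\dots,n\}\setminus\{i_1,\dots,i_k\}$ such that the matrix $N\in\mathbb{F}[t]^{n\times n}$ whose $i$-th row is $M_i$ for $i\in\{i_1,\dots,i_k\}$ and $\widehat M_i$ otherwise is a unit of the ring $\mathcal{M}$.
   Context: Let $\mathbb{F}$ be a finite field with $q$ elements and $n\geq 2$ a divisor of $q-1$. $\mathcal{M}=\{(m_{ab})\in\mathbb{F}[t]^{n\times n}\mid m_{ab}(0)=0\text{ for }1\le b<a\le n\}$, a subring of $\mathbb{F}[t]^{n\times n}$. For $M=(m_{ab})\in\mathcal{M}$, $\mathrm{Supp}(M)$ is the set of indices $a$ such that the $a$-th row of $M$ is nonzero, and $M$ is called delay-free if $m_{aa}(0)\ne0$ for all $a\in\mathrm{Supp}(M)$. A matrix $G\in\mathbb{F}[t]^{k\times n}$ is basic if $\mathrm{rank}\,G(\lambda)=k$ for all $\lambda$ in an algebraic closure of $\mathbb{F}$ (equivalently, its $k\times k$ minors are coprime). *)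

(* Defs.v *)
From HB Require Import structures.
From mathcomp Require Import all_boot all_order all_algebra all_field.
Set Implicit Arguments. Unset Strict Implicit. Unset Printing Implicit Defensive.
Import GRing.Theory.
Local Open Scope ring_scope.

Definition inM (F : fieldType) (n : nat) (M : 'M[{poly F}]_n) : bool :=
  [forall a : 'I_n, forall b : 'I_n, (b < a)%N ==> ((M a b).[0] == 0)].

Definition Supp (F : fieldType) (n : nat) (M : 'M[{poly F}]_n) : {set 'I_n} :=
  [set a | row a M != 0].

Definition delay_free (F : fieldType) (n : nat) (M : 'M[{poly F}]_n) : bool :=
  inM M && [forall a in Supp M, (M a a).[0] != 0].

(* G : k x n polynomial matrix is basic: rank G(lambda) = k for every lambda
   in an algebraically closed field extending F (in particular the algebraic
   closure), the extension being given by a ring morphism f. *)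
Definition basic (F : fieldType) (k n : nat) (G : 'M[{poly F}]_(k, n)) : Prop :=
  forall (L : closedFieldType) (f : {rmorphism F -> L}) (lam : L),
    \rank (map_mx (fun p => (map_poly f p).[lam]) G) = k.

Definition unit_M (F : fieldType) (n : nat) (N : 'M[{poly F}]_n) : Prop :=
  inM N /\ exists N' : 'M[{poly F}]_n,
    [/\ inM N', N *m N' = 1%:M & N' *m N = 1%:M].

Definition Mtilde (F : fieldType) (n : nat) (M : 'M[{poly F}]_n)
  : 'M[{poly F}]_(#|Supp M|, n) :=
  \matrix_(j < #|Supp M|, c < n) M (enum_val j) c.

(* Main.v *)
Require Import Defs.
From HB Require Import structures.
From mathcomp Require Import all_boot all_order all_algebra all_field.
From mathcomp Require Import fingroup perm.
From mathcomp Require Import zify.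
From Stdlib Require Import Lia.
Set Implicit Arguments. Unset Strict Implicit. Unset Printing Implicit Defensive.
Import GRing.Theory.
Local Open Scope ring_scope.

Section Euclid.
Variables (F : fieldType) (n : nat).
Local Notation R := {poly F}.

Lemma supp_mul (U : {set 'I_n}) (c : 'rV[R]_n) (A B : 'M[R]_n) :
  (forall i, i \notin U -> c 0 i = 0) -> (forall i, i \in U -> row i A = row i B) ->
  c *m A = c *m B.
Proof.
move=> hc hAB; rewrite !mulmx_sum_row; apply: eq_bigr => i _.
by case: (boolP (i \in U)) => hi; [rewrite hAB | rewrite hc // !scale0r].
Qed.

Lemma row_perm_delta (s : 'S_n) j : row j (perm_mx s : 'M[R]_n) = delta_mx 0 (s j).
Proof. by apply/rowP => k; rewrite !mxE eqxx /= eq_sym. Qed.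

Lemma euclid_base (T : {set 'I_n}) (s : 'I_n) : s \in T -> forall x : 'rV[R]_n,
  (forall j, j \notin T -> x 0 j = 0) ->
  ~~ [exists a, exists b, (a != b) && (x 0 a != 0) && (x 0 b != 0)] ->
  exists g, exists E : 'M[R]_n, [/\ E \in unitmx,
    (forall j, j \notin T -> row j E = delta_mx 0 j) & x = g *: row s E].
Proof.
move=> sT x hx none2.
have [/existsP [a xa] | none1] := boolP [exists a, x 0 a != 0].
- have aT : a \in T by apply: contraLR xa => /hx ->; rewrite negbK.
  have xE : x = x 0 a *: delta_mx 0 a.
    apply/rowP => k; rewrite !mxE eqxx /=.
    case: (k =P a) => [->|/eqP ka]; first by rewrite mulr1.
    rewrite mulr0; apply/eqP; apply: contraR none2 => xk; apply/existsP; exists a.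
    by apply/existsP; exists k; rewrite xa xk eq_sym ka.
  exists (x 0 a), (perm_mx (tperm s a)); split.
  + exact: unitmx_perm.
  + move=> j jT; rewrite row_perm_delta tpermD //.
      by apply: contraNneq jT => <-.
    by apply: contraNneq jT => <-.
  + by rewrite row_perm_delta tpermL.
- exists 0, 1%:M; split; first exact: unitmx1.
    by move=> j _; rewrite row1.
  apply/rowP => k; rewrite scale0r mxE; apply/eqP; apply: contraR none1 => h.
  by apply/existsP; exists k.
Qed.

Lemma euclid (T : {set 'I_n}) (s : 'I_n) : s \in T -> forall x : 'rV[R]_n,
  (forall j, j \notin T -> x 0 j = 0) ->
  exists g, exists E : 'M[R]_n, [/\ E \in unitmx,
    (forall j, j \notin T -> row j E = delta_mx 0 j) & x = g *: row s E].
Proof.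
move=> sT x.
move: {2}(\sum_j size (x ord0 j))%N (leqnn (\sum_j size (x ord0 j)))%N => m.
elim: m x => [|m IH] x hm hx.
all: have [/existsP [a /existsP [b /andP [/andP [ab xa] xb]]] | none2] :=
  boolP [exists a, exists b, (a != b) && (x 0 a != 0) && (x 0 b != 0)].
- have : (0 < \sum_j size (x ord0 j))%N.
    by rewrite (bigD1 a) //= addn_gt0 size_poly_gt0 xa.
  by rewrite lt0n -leqn0 hm.
- exact: euclid_base.
- wlog hsz : a b ab xa xb / (size (x ord0 b) <= size (x ord0 a))%N.
    move=> W; case: (leqP (size (x 0 b)) (size (x 0 a))) => h; first exact: W h.
    by apply: (W b a) => //; [rewrite eq_sym | exact: ltnW].
  have bT : b \in T by apply: contraLR xb => /hx ->; rewrite negbK.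
  pose q := x 0 a %/ x 0 b.
  pose x2 := x - (q * x 0 b) *: delta_mx 0 a.
  have x2E j : x2 0 j = if j == a then x 0 a %% x 0 b else x 0 j.
    rewrite !mxE eqxx /=; case: (j =P a) => [->|_]; last by rewrite mulr0 subr0.
    by rewrite mulr1 {1}(divp_eq (x 0 a) (x 0 b)) addrAC subrr add0r.
  have hx2 j : j \notin T -> x2 0 j = 0.
    move=> jT; rewrite x2E; case: eqP => [ja|_]; last exact: hx.
    by rewrite hx ?mod0p // -ja.
  have hm2 : (\sum_j size (x2 ord0 j) <= m)%N.
    rewrite -ltnS (leq_trans _ hm) // (bigD1 a) //= [X in (_ < X)%N](bigD1 a) //=.
    rewrite x2E eqxx -addSn leq_add //.
      exact: leq_trans (ltn_modpN0 _ xb) hsz.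
    by rewrite leq_eqVlt; apply/orP; left; apply/eqP; apply: eq_bigr => j /negbTE ja; rewrite x2E ja.
  have [g [E2 [uE2 rE2 xE2]]] := IH x2 hm2 hx2.
  pose Op := 1%:M + q *: (delta_mx b a : 'M[R]_n).
  have dd : (delta_mx b a : 'M[R]_n) *m delta_mx b a = 0.
    by rewrite mul_delta_mx_cond (negbTE ab) mulr0n.
  have uOp : Op \in unitmx.
    apply: (proj1 (@mulmx1_unit _ _ Op (1%:M - q *: delta_mx b a) _)).
    by rewrite mulmxBr mulmx1 mulmxDl mul1mx -scalemxAl -scalemxAr dd !scaler0 addr0 addrK.
  exists g, (E2 *m Op); split.
  + by rewrite unitmx_mul uE2.
  + move=> j jT; rewrite row_mul rE2 // mulmxDr mulmx1 -scalemxAr mul_delta_mx_cond.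
    have -> : (j == b) = false by apply/eqP => jb; move: jT; rewrite jb bT.
    by rewrite mulr0n scaler0 addr0.
  + rewrite row_mul scalemxAl -xE2 mulmxDr mulmx1 -scalemxAr.
    apply/rowP => k; rewrite !mxE.
    rewrite (bigD1 b) //= big1 ?addr0; last first.
      by move=> i /negbTE ib; rewrite !mxE ib andFb mulr0.
    have ba : (b == a) = false by rewrite eq_sym (negbTE ab).
    rewrite !mxE ba !eqxx andbF mulr0 subr0 /=.
    by rewrite mulrA [q * _]mulrC addrNK.
- exact: euclid_base.
Qed.
End Euclid.
Section Sel.
Variables (K : comNzRingType) (n : nat) (S : {set 'I_n}).
Definition selmx : 'M[K]_(#|S|, n) := \matrix_(j, l) (enum_val j == l)%:R.

Lemma selmx_tr : selmx *m selmx^T = 1%:M.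
Proof.
apply/matrixP => j j'; rewrite !mxE (bigD1 (enum_val j)) //= big1 ?addr0; last first.
  by move=> l hl; rewrite !mxE eq_sym (negbTE hl) mul0r.
by rewrite !mxE eqxx mul1r (inj_eq enum_val_inj) eq_sym.
Qed.

Lemma selmx_proj (c : 'rV[K]_n) : (forall i, i \notin S -> c 0 i = 0) ->
  c *m selmx^T *m selmx = c.
Proof.
move=> hc; apply/rowP => l; rewrite !mxE.
have e1 j : (c *m selmx^T) 0 j = c 0 (enum_val j).
  rewrite !mxE (bigD1 (enum_val j)) //= big1 ?addr0; last first.
    by move=> i hi; rewrite !mxE eq_sym (negbTE hi) mulr0.
  by rewrite !mxE eqxx mulr1.
under eq_bigr => j _ do rewrite e1 mxE.
rewrite -(big_enum_val (A := mem S) (fun x => c 0 x * (x == l)%:R)) /=.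
case: (boolP (l \in S)) => hl.
  rewrite (bigD1 l) //= eqxx mulr1 big1 ?addr0 //.
  by move=> i /andP [_ /negbTE ->]; rewrite mulr0.
rewrite hc // big1 // => i iS; have -> : (i == l) = false.
  by apply/eqP => il; move: hl; rewrite -il iS.
by rewrite mulr0.
Qed.
End Sel.

Section SelF.
Variables (L : fieldType) (n : nat) (S : {set 'I_n}).
Local Notation sel := (@selmx L _ S).

Lemma rank_selmx : \rank sel = #|S|.
Proof.
apply/eqP; rewrite eqn_leq rank_leq_row /=.
by rewrite -{1}(mxrank1 L #|S|) -(selmx_tr L S) mxrankM_maxl.
Qed.

Lemma rank_selmx_unit (B : 'M[L]_n) : B \in unitmx -> \rank (sel *m B) = #|S|.
Proof. by move=> uB; rewrite mxrankMfree ?rank_selmx // row_free_unit. Qed.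

Lemma sel_indep (A : 'M[L]_n) : \rank (sel *m A) = #|S| ->
  forall c : 'rV_n, (forall i, i \notin S -> c 0 i = 0) -> c *m A = 0 -> c = 0.
Proof.
move=> rk c hc cA.
have rf : row_free (sel *m A) by rewrite /row_free rk.
have d0 : c *m sel^T = 0.
  apply: (row_free_inj rf); rewrite mul0mx mulmxA selmx_proj //.
by rewrite -(selmx_proj hc) d0 mul0mx.
Qed.
End SelF.

Section Comp.
Variables (F : fieldType) (L : closedFieldType) (f : {rmorphism F -> L}).
Variables (n : nat) (M : 'M[{poly F}]_n) (U : {set 'I_n}).
Local Notation ev lam := (horner_eval lam \o map_poly f).
Hypothesis hind : forall (lam : L) (c : 'rV[L]_n), (forall i, i \notin U -> c 0 i = 0) ->
  c *m map_mx (ev lam) M = 0 -> c = 0.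

Lemma comp (S : {set 'I_n}) : S \subset U ->
  exists N0 : 'M[{poly F}]_n, N0 \in unitmx /\ (forall j, j \in S -> row j N0 = row j M).
Proof.
move: {2}#|S| (leqnn #|S|) => k.
elim: k S => [|k IH] S hk sSU.
  exists 1%:M; split; first exact: unitmx1.
  by move=> j; rewrite (cards0_eq (_ : #|S| = 0%N)) ?inE //; apply/eqP; rewrite -leqn0.
case: (set_0Vmem S) => [-> | [s sS]].
  by exists 1%:M; split; [exact: unitmx1 | move=> j; rewrite inE].
pose S' := S :\ s.
have hS' : (#|S'| <= k)%N by move: hk; rewrite (cardsD1 s S) sS.
have sS'U : S' \subset U := subset_trans (subsetDl S [set s]) sSU.
have [N' [uN' rN']] := IH S' hS' sS'U.
have S'S i : i \in S' -> i \in S by rewrite !inE => /andP [].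
have S's i : i \in S' -> (i == s) = false by rewrite !inE => /andP [/negbTE].
have sS' : s \in S' = false by rewrite setD11.
pose x := row s M *m invmx N'.
pose x2 := \row_j (if j \in S' then x 0 j else 0).
pose x1 := x - x2.
pose T := ~: S'.
have sT : s \in T by rewrite in_setC sS'.
have hx1 j : j \notin T -> x1 0 j = 0.
  by rewrite in_setC negbK => jS'; rewrite !mxE jS' subrr.
have [g [E [uE rE xE]]] := euclid sT hx1.
have x2supp i : i \notin S' -> x2 0 i = 0 by move=> /negbTE h; rewrite mxE h.
have key : row s M = x2 *m M + g *: (row s E *m N').
  have -> : row s M = x *m N' by rewrite mulmxKV.
  have xs : x = x1 + x2 by rewrite addrNK.
  rewrite {1}xs mulmxDl -/x1 xE -scalemxAl addrC; congr (_ + _).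
  by apply: (supp_mul (U := S')) => // i iS; rewrite rN' // S'S.
have gu : g \is a GRing.unit.
  apply/negPn/negP => gnu.
  have sg : size (map_poly f g) != 1%N.
    rewrite size_map_poly; apply: contra gnu => /eqP sg1.
    have : lead_coef g != 0 by rewrite lead_coef_eq0 -size_poly_eq0 sg1.
    by rewrite poly_unitE sg1 /= unitfE lead_coefE sg1.
  have [lam rlam] := closed_rootP _ sg.
  pose c := delta_mx 0 s - map_mx (ev lam) x2.
  have c0 : c = 0.
    apply: (@hind lam).
      move=> i iU; have iS : i \notin S by apply: contra iU; apply: (subsetP sSU).
      have is' : i \notin S' by apply: contra iS; apply: S'S.
      rewrite !mxE; have -> : (i == s) = false by apply/eqP => si; move: iS; rewrite si sS.
      by rewrite (negbTE is') /= map_poly0 horner_evalE horner0 subr0.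
    rewrite mulmxBl -rowE -map_row key map_mxD map_mxM map_mxZ /=.
    by rewrite horner_evalE (eqP rlam) scale0r addr0 subrr.
  have := congr1 (fun m : 'rV[L]_n => m ord0 s) c0; rewrite !mxE !eqxx /= sS' map_poly0 horner_evalE horner0 subr0.
  by move/eqP; rewrite oner_eq0.
pose D : 'M[{poly F}]_n := diag_mx (\row_i (if i == s then g else 1)).
have uD : D \in unitmx.
  rewrite unitmxE det_diag (bigD1 s) //= big1 ?mulr1; first by rewrite mxE eqxx.
  by move=> i /negbTE ni; rewrite mxE ni.
have rowD j (B : 'M[{poly F}]_n) : row j (D *m B) = (if j == s then g else 1) *: row j B.
  by apply/rowP => k0; rewrite mul_diag_mx !mxE.
pose ds : 'M[{poly F}]_(n, 1) := delta_mx s 0.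
pose Rm := 1%:M + ds *m x2.
have x2s : x2 *m ds = 0.
  apply/matrixP => i0 j0; rewrite !mxE (bigD1 s) //= big1 ?addr0.
    by rewrite !mxE sS' mul0r.
  by move=> i /negbTE ni; rewrite !mxE ni mulr0.
have uRm : Rm \in unitmx.
  apply: (proj1 (@mulmx1_unit _ _ Rm (1%:M - ds *m x2) _)).
  rewrite mulmxBr mulmx1 mulmxDl mul1mx -mulmxA (mulmxA x2) x2s mul0mx mulmx0.
  by rewrite addr0 addrK.
have rowRm j : row j Rm = delta_mx 0 j + (j == s)%:R *: x2.
  apply/rowP => k0; rewrite !mxE big_ord1 !mxE.
  by rewrite !eqxx andbT eq_sym.
have rDE i : i \in S' -> row i (D *m E *m N') = row i M.
  move=> iS'; rewrite row_mul rowD S's // scale1r rE ?in_setC ?negbK //.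
  by rewrite -rowE rN' // S'S.
exists (Rm *m (D *m E *m N')); split.
  by rewrite !unitmx_mul uRm uD uE uN'.
move=> j jS; rewrite row_mul rowRm.
case: (j =P s) => [-> | /eqP js].
  rewrite scale1r mulmxDl -rowE key addrC; congr (_ + _).
    by apply: (supp_mul (U := S')) => // i iS; rewrite rDE.
  by rewrite row_mul rowD eqxx -scalemxAl.
have jS' : j \in S' by rewrite !inE js jS.
by rewrite scale0r addr0 -rowE rDE.
Qed.
End Comp.

Lemma upper_inv (K : fieldType) n (P P' : 'M[K]_n) :
  (forall a b : 'I_n, (b < a)%N -> P a b = 0) -> (forall a, P a a != 0) ->
  P *m P' = 1%:M -> forall a b : 'I_n, (b < a)%N -> P' a b = 0.
Proof.
move=> hP hd hPP.
suff H m : forall a b : 'I_n, (n - m <= a)%N -> (b < a)%N -> P' a b = 0.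
  by move=> a b; apply: (H n); rewrite subnn.
elim: m => [|m IH] a b ha hba.
  by have := ltn_ord a; rewrite subn0 in ha; rewrite ltnNge ha.
case: (leqP (n - m) a) => h; first exact: IH.
have := congr1 (fun A : 'M[K]_n => A a b) hPP; rewrite !mxE (bigD1 a) //= big1 ?addr0.
  have -> : (a == b) = false by apply/eqP => ab; move: hba; rewrite ab ltnn.
  by move/eqP; rewrite mulf_eq0 (negbTE (hd a)) /= => /eqP.
move=> l la; case: (ltnP l a) => hl; first by rewrite hP // mul0r.
have al : (a < l)%N by rewrite ltn_neqAle hl andbT eq_sym.
rewrite (IH l b) ?mulr0 //; last exact: ltn_trans hba al.
by move: h ha al; clear; lia.
Qed.

Lemma sel_mul (K : comNzRingType) n (S : {set 'I_n}) (A : 'M[K]_n) j c :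
  (@selmx K _ S *m A) j c = A (enum_val j) c.
Proof.
rewrite !mxE (bigD1 (enum_val j)) //= big1 ?addr0; first by rewrite mxE eqxx mul1r.
by move=> i hi; rewrite mxE eq_sym (negbTE hi) mul0r.
Qed.

Lemma map_selmx (K K' : comNzRingType) (g : {rmorphism K -> K'}) n (S : {set 'I_n}) :
  map_mx g (@selmx K _ S) = @selmx K' _ S.
Proof. by apply/matrixP => i j; rewrite !mxE rmorph_nat. Qed.

Lemma Mtilde_sel (F : fieldType) n (M : 'M[{poly F}]_n) :
  Mtilde M = @selmx _ _ (Supp M) *m M.
Proof. by apply/matrixP => j c; rewrite sel_mul mxE. Qed.

Lemma basic_ev (F : fieldType) n (M : 'M[{poly F}]_n) (L : closedFieldType)
  (f : {rmorphism F -> L}) (lam : L) :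
  map_mx (fun p => (map_poly f p).[lam]) (Mtilde M) =
  @selmx _ _ (Supp M) *m map_mx (horner_eval lam \o map_poly f) M.
Proof.
have -> : map_mx (fun p => (map_poly f p).[lam]) (Mtilde M) =
   map_mx (horner_eval lam \o map_poly f) (Mtilde M).
  by apply/matrixP => i j; rewrite !mxE.
by rewrite Mtilde_sel map_mxM map_selmx.
Qed.

Lemma unit_map (R1 R2 : comUnitRingType) (g : {rmorphism R1 -> R2}) n (A : 'M[R1]_n) :
  A \in unitmx -> map_mx g A \in unitmx.
Proof. by rewrite !unitmxE det_map_mx; apply: rmorph_unit. Qed.

Unset Implicit Arguments.

Theorem lemma3p14 (F : finFieldType) (n : nat)
  (hn2 : (2 <= n)%N) (hnq : (n %| #|F|.-1)%N)
  (M : 'M[{poly F}]_n) (hM : inM M) (hdf : delay_free M) :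
  basic (Mtilde M) <->
  exists Mhat : 'I_n -> 'rV[{poly F}]_n,
    unit_M (\matrix_(i < n) (if i \in Supp M then row i M else Mhat i)).
Proof.
split.
- move=> hb.
  have [L0 [f0 _]] := countable_algebraic_closure F.
  have hind : forall (lam : L0) (c : 'rV[L0]_n), (forall i, i \notin Supp M -> c 0 i = 0) ->
      c *m map_mx (horner_eval lam \o map_poly f0) M = 0 -> c = 0.
    move=> lam; apply: sel_indep.
    by rewrite -basic_ev; apply: hb.
  have [N0 [uN0 rN0]] := comp hind (subxx (Supp M)).
  have hMi : forall a b : 'I_n, (b < a)%N -> (M a b).[0] = 0.
    by move=> a b ba; move/forallP: hM => /(_ a) /forallP /(_ b) /implyP /(_ ba) /eqP.
  have hd : forall a, a \in Supp M -> (M a a).[0] != 0.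
    by case/andP: hdf => _ /forallP hd a aS; move/implyP: (hd a); apply.
  pose ev0 := horner_eval (0 : F).
  pose P : 'M[F]_n := \matrix_(i, j) if i \in Supp M then (M i j).[0] else (i == j)%:R.
  have Pl (a b : 'I_n) : (b < a)%N -> P a b = 0.
    move=> ba; rewrite mxE; case: ifP => _; first exact: hMi.
    by have -> : (a == b) = false by apply/eqP => ab; move: ba; rewrite ab ltnn.
  have Pd (a : 'I_n) : P a a != 0.
    by rewrite mxE; case: ifP => aS; [exact: hd | rewrite eqxx oner_eq0].
  have uP : P \in unitmx.
    rewrite unitmxE -det_tr det_trig; last first.
      by apply/is_trig_mxP => i j ij; rewrite mxE Pl.
    rewrite unitfE; apply/prodf_neq0 => i _; rewrite mxE; exact: Pd.
  pose N00 := map_mx ev0 N0.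
  have uN00 : N00 \in unitmx := unit_map ev0 uN0.
  pose T := P *m invmx N00.
  have uT : T \in unitmx by rewrite unitmx_mul uP unitmx_inv.
  pose N := map_mx polyC T *m N0.
  have rP i : i \in Supp M -> row i P = row i N00.
    move=> iS; apply/rowP => k; rewrite !mxE iS /=.
    by have := congr1 (fun v : 'rV_n => v ord0 k) (rN0 i iS); rewrite !mxE => ->.
  have rT i : i \in Supp M -> row i T = delta_mx 0 i.
    by move=> iS; rewrite row_mul rP // rowE mulmxK.
  have rN i : i \in Supp M -> row i N = row i M.
    by move=> iS; rewrite row_mul -map_row rT // map_delta_mx -rowE rN0.
  have N0P : map_mx ev0 N = P.
    rewrite map_mxM (_ : map_mx ev0 (map_mx polyC T) = T) ?mulmxKV //.
    by apply/matrixP => i j; rewrite !mxE /= /ev0 horner_evalE hornerC.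
  have uN : N \in unitmx by rewrite unitmx_mul uN0 andbT; exact: unit_map.
  exists (fun i => row i N).
  have -> : \matrix_(i < n) (if i \in Supp M then row i M else row i N) = N.
    by apply/row_matrixP => i; rewrite rowK; case: ifP => // iS; rewrite rN.
  have inMA (A : 'M[{poly F}]_n) (PA : 'M[F]_n) : map_mx ev0 A = PA ->
      (forall a b : 'I_n, (b < a)%N -> PA a b = 0) -> inM A.
    move=> hA hPA; apply/forallP => a; apply/forallP => b; apply/implyP => ba.
    have := congr1 (fun B : 'M_n => B a b) hA; rewrite !mxE /= /ev0 horner_evalE => ->.
    by rewrite hPA.
  split; first exact: inMA N0P Pl.
  exists (invmx N); split; [|exact: mulmxV|exact: mulVmx].
  apply: (inMA _ _ (erefl _)); apply: (upper_inv Pl Pd).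
  by rewrite -N0P -map_mxM mulmxV // map_mx1.
- case=> Mhat [_ [N' [_ hNN _]]] L f lam.
  set N := \matrix_(i < n) _ in hNN.
  have uN : N \in unitmx := proj1 (mulmx1_unit hNN).
  have -> : Mtilde M = @selmx _ _ (Supp M) *m N.
    apply/matrixP => j c; rewrite sel_mul mxE /=.
    by rewrite mxE (enum_valP j) mxE.
  rewrite (_ : map_mx _ _ = @selmx _ _ (Supp M) *m map_mx (horner_eval lam \o map_poly f) N).
    exact/rank_selmx_unit/unit_map.
  rewrite -(map_selmx (horner_eval lam \o map_poly f)) -map_mxM.
  by apply/matrixP => i j; rewrite !mxE.
Qed.
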